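(* Let $M$ be a finite abelian group of exponent greater than $2$ and let $f$ be a half-automorphism of $L_M$. Then there exist a unique $f'\in\mathrm{Aut}(K)$ and elements $x,y\in M$ with $x^2=y^2=1$ such that $f(A,1)=(f'(A),\alpha_{(x,y)}(A))$ for every $A\in K$.
   Context: Let $K=\{1,a,b,c\}$ be the Klein four-group. Set $L_M=K\times M$ with the operation $(A,x)*(B,y)=(AB,xy)$ if $B=1$, and $(A,x)*(B,y)=(AB,x^{-1}y)$ if $B\neq 1$. For $x,y\in M$ with $x^2=y^2=1$, $\alpha_{(x,y)}:K\to M$ is the map $\alpha_{(x,y)}(1)=1$, $\alpha_{(x,y)}(a)=x$, $\alpha_{(x,y)}(b)=y$, $\alpha_{(x,y)}(c)=xy$. A half-automorphism of a loop $L$ is a bijection $f:L\to L$ such that $f(XY)\in\{f(X)f(Y),f(Y)f(X)\}$ for all $X,Y\in L$. *)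

(* Defs.v *)
From mathcomp Require Import all_boot all_fingroup all_solvable.
Set Implicit Arguments. Unset Strict Implicit. Unset Printing Implicit Defensive.
Local Open Scope group_scope.

Inductive Klein := K1 | Ka | Kb | Kc.

Definition kmul (A B : Klein) : Klein :=
  match A, B with
  | K1, X | X, K1 => X
  | Ka, Ka | Kb, Kb | Kc, Kc => K1
  | Ka, Kb | Kb, Ka => Kc
  | Ka, Kc | Kc, Ka => Kb
  | Kb, Kc | Kc, Kb => Ka
  end.

Definition is_autK (g : Klein -> Klein) : Prop :=
  bijective g /\ forall A B, g (kmul A B) = kmul (g A) (g B).

Definition LM_mul (M : finGroupType) (X Y : Klein * M) : Klein * M :=
  match Y.1 with
  | K1 => (kmul X.1 Y.1, X.2 * Y.2)
  | _  => (kmul X.1 Y.1, (X.2)^-1 * Y.2)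
  end.

Definition half_aut (M : finGroupType) (f : Klein * M -> Klein * M) : Prop :=
  bijective f /\
  forall X Y, f (LM_mul X Y) = LM_mul (f X) (f Y) \/
              f (LM_mul X Y) = LM_mul (f Y) (f X).

Definition alpha (M : finGroupType) (x y : M) (A : Klein) : M :=
  match A with
  | K1 => 1
  | Ka => x
  | Kb => y
  | Kc => x * y
  end.

(* Main.v *)
Require Import Defs.
From mathcomp Require Import all_boot all_fingroup all_solvable.
From Stdlib Require Import FunctionalExtensionality.
Local Open Scope group_scope.

Lemma kmulA1 A : kmul A K1 = A. Proof. by case: A. Qed.
Lemma kmulC A B : kmul A B = kmul B A. Proof. by case: A; case: B. Qed.
Lemma kmulAA A : kmul A A = K1. Proof. by case: A. Qed.

Lemma LM_fst (M : finGroupType) (X Y : Klein * M) : (LM_mul X Y).1 = kmul X.1 Y.1.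
Proof. by rewrite /LM_mul; case: Y.1. Qed.

Lemma LMm1 (M : finGroupType) A (x y : M) : LM_mul (A, x) (K1, y) = (A, x * y).
Proof. by rewrite /LM_mul /= kmulA1. Qed.

Lemma LMmN (M : finGroupType) A B (x y : M) : B <> K1 ->
  LM_mul (A, x) (B, y) = (kmul A B, x^-1 * y).
Proof. by rewrite /LM_mul /=; case: B. Qed.

Definition keq (A B : Klein) : bool :=
  match A, B with
  | K1, K1 | Ka, Ka | Kb, Kb | Kc, Kc => true | _, _ => false end.

Lemma keqP A B : keq A B = true -> A = B. Proof. by case: A; case: B. Qed.
Lemma keqR A : keq A A = true. Proof. by case: A. Qed.

Lemma autK_of (g : Klein -> Klein) :
  g K1 = K1 -> g Ka <> K1 -> g Kb <> K1 -> g Kc <> K1 ->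
  (forall A B, g (kmul A B) = kmul (g A) (g B)) -> is_autK g.
Proof.
move=> h1 ha hb hc hm; split=> //.
have hab : g Ka <> g Kb by move=> e; apply: hc; rewrite -[Kc]/(kmul Ka Kb) hm e kmulAA.
have hac : g Ka <> g Kc by move=> e; apply: hb; rewrite -[Kb]/(kmul Ka Kc) hm e kmulAA.
have hbc : g Kb <> g Kc by move=> e; apply: ha; rewrite -[Ka]/(kmul Kb Kc) hm e kmulAA.
exists (fun y => if keq (g Ka) y then Ka else if keq (g Kb) y then Kb
                 else if keq (g Kc) y then Kc else K1).
- by move=> A; case: A; case Ea: (g Ka); case Eb: (g Kb); case Ec: (g Kc);
    rewrite /= ?Ea ?Eb ?Ec ?h1 //; congruence.
- by move=> A; case: A; case Ea: (g Ka); case Eb: (g Kb); case Ec: (g Kc);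
    rewrite /= ?Ea ?Eb ?Ec ?h1 //; congruence.
Qed.

Section Main.
Variable M : finGroupType.
Hypothesis mC : forall x y : M, x * y = y * x.
Variable f : Klein * M -> Klein * M.
Hypothesis finj : injective f.
Hypothesis fh : forall X Y, f (LM_mul X Y) = LM_mul (f X) (f Y) \/
              f (LM_mul X Y) = LM_mul (f Y) (f X).
Variable m : M.
Hypothesis hm : m * m <> 1.

Lemma sq1 (x : M) : x * x = 1 -> x^-1 = x.
Proof. by move=> e; rewrite -[x^-1]mulg1 -e mulKg. Qed.

Lemma f_e : f (K1, 1) = (K1, 1).
Proof.
have e : f (K1, 1) = LM_mul (f (K1,1)) (f (K1,1)).
  by have := fh (K1,1) (K1,1); rewrite LMm1 mulg1; case.
move: e; case: (f (K1,1)) => [D t]; case: D => /=; rewrite /LM_mul /=.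
- by case=> e; congr (_, _); apply: (mulIg t); rewrite mul1g -e.
all: by [].
Qed.

Lemma f_m : (f (K1, m)).1 = K1.
Proof.
have e : f (K1, m * m) = LM_mul (f (K1,m)) (f (K1,m)).
  by have := fh (K1,m) (K1,m); rewrite LMm1; case.
case E: (f (K1,m)) e => [D t]; case: D E => E //; rewrite LMmN // mulVg /= -f_e => /finj [] //.
Qed.

Lemma mmI : m <> m^-1.
Proof. by move=> e; apply: hm; rewrite {2}e mulgV. Qed.

Lemma f_A A : A <> K1 -> (f (A, 1)).1 <> K1.
Proof.
move=> hA.
have e1 : LM_mul (A, 1) (K1, m) = (A, m) by rewrite LMm1 mul1g.
have e2 : LM_mul (K1, m) (A, 1) = (A, m^-1) by rewrite LMmN // mulg1.
case E: (f (A,1)) => [D t] /= hD; subst D.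
case E2: (f (K1,m)) => [D P]; have := f_m; rewrite E2 /= => hD; subst D.
have := fh (A,1) (K1,m); have := fh (K1,m) (A,1); rewrite e1 e2 E E2 !LMm1.
have : (K1, t * P) = (K1, P * t) by rewrite mC.
move=> ee h2 h1.
have : f (A, m) = f (A, m^-1) by case: h1 h2 => -> [] ->; rewrite ?ee.
by move/finj=> [] /mmI.
Qed.

Lemma f_Am A : A <> K1 -> (f (A, m)).1 <> K1.
Proof.
move=> hA; have := f_A _ hA.
have e1 : LM_mul (A, 1) (K1, m) = (A, m) by rewrite LMm1 mul1g.
case E: (f (A,1)) => [D t] /= hD.
case E2: (f (K1,m)) => [D' P]; have := f_m; rewrite E2 /= => hD'; subst D'.
have := fh (A,1) (K1,m); rewrite e1 E E2 LMm1 LMmN //.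
by case=> ->.
Qed.

Lemma key A B C : A <> K1 -> B <> K1 -> C <> K1 -> kmul A B = C ->
  (f (C, 1)).2 * (f (C, 1)).2 = 1.
Proof.
move=> hA hB hC eC.
have hmI : f (C, m) <> f (C, m^-1) by move/finj=> [] /mmI.
have r1 : (f (C,m)).2 * (f (C,m^-1)).2 = (f (C,1)).2 * (f (C,1)).2.
  have e1 : LM_mul (C, 1) (K1, m) = (C, m) by rewrite LMm1 mul1g.
  have e2 : LM_mul (K1, m) (C, 1) = (C, m^-1) by rewrite LMmN // mulg1.
  have := f_A _ hC.
  case E: (f (C,1)) => [D z] /= hD.
  case E2: (f (K1,m)) => [D' P]; have := f_m; rewrite E2 /= => hD'; subst D'.
  move: hmI; have := fh (C,1) (K1,m); have := fh (K1,m) (C,1); rewrite e1 e2 E E2 LMm1 LMmN //.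
  case=> -> [] -> /= hh; try (by exfalso; apply: hh).
  + by rewrite mulgA mulgK.
  + by rewrite (mC (P^-1 * z)) mulgA mulgK.
have r2 : (f (C,m)).2 * (f (C,m^-1)).2 = 1.
  have e1 : LM_mul (A, m) (B, 1) = (C, m^-1) by rewrite LMmN // mulg1 eC.
  have e2 : LM_mul (B, 1) (A, m) = (C, m) by rewrite LMmN // invg1 mul1g kmulC eC.
  have := f_A _ hB; have := f_Am _ hA.
  case E: (f (A,m)) => [D g] /= hD.
  case E2: (f (B,1)) => [D' h] /= hD'.
  move: hmI; have := fh (A,m) (B,1); have := fh (B,1) (A,m); rewrite e1 e2 E E2 !LMmN //.
  rewrite (kmulC D').
  case=> -> [] -> /= hh; try (by exfalso; apply: hh).
  + by rewrite mulgA mulgK mulVg.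
  + by rewrite mulgA mulgK mulVg.
by rewrite -r1 r2.
Qed.

Lemma f_hom A B : (f (kmul A B, 1)).1 = kmul (f (A,1)).1 (f (B,1)).1.
Proof.
have e : LM_mul (A,1) (B,1) = (kmul A B, 1 : M).
  by case: B; rewrite /LM_mul /= ?mulg1 ?invg1 ?mulg1.
by have := fh (A,1) (B,1); rewrite e; case=> ->; rewrite LM_fst // kmulC.
Qed.

Lemma main_ex : exists f' : Klein -> Klein,
    [/\ is_autK f',
        (exists x y : M, [/\ x ^+ 2 = 1, y ^+ 2 = 1 &
           forall A : Klein, f (A, 1) = (f' A, alpha x y A)]) &
        (forall g : Klein -> Klein, is_autK g ->
           (exists x y : M, [/\ x ^+ 2 = 1, y ^+ 2 = 1 &
              forall A : Klein, f (A, 1) = (g A, alpha x y A)]) ->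
           g = f')].
Proof.
pose g A := (f (A,1)).1.
have g1 : g K1 = K1 by rewrite /g f_e.
have ka := key Kb Kc Ka (fun e => ltac:(discriminate)) (fun e => ltac:(discriminate))
   (fun e => ltac:(discriminate)) erefl.
have kb := key Ka Kc Kb (fun e => ltac:(discriminate)) (fun e => ltac:(discriminate))
   (fun e => ltac:(discriminate)) erefl.
have ec : (f (Kc,1)).2 = (f (Ka,1)).2 * (f (Kb,1)).2.
  have e : LM_mul (Ka,1) (Kb,1) = (Kc, 1 : M) by rewrite LMmN // invg1 mulg1.
  have na := f_A Ka (fun e => ltac:(discriminate)).
  have nb := f_A Kb (fun e => ltac:(discriminate)).
  have := fh (Ka,1) (Kb,1); rewrite e.
  move: (sq1 _ ka) (sq1 _ kb) na nb; case: (f (Ka,1)) => [A' x']; case: (f (Kb,1)) => [B' y'] /=.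
  by move=> ha hb na nb; case=> ->; rewrite LMmN //= ?ha ?hb // mC.
exists g; split.
- apply: autK_of => //; try (apply: f_A; discriminate).
  exact: f_hom.
- exists (f (Ka,1)).2, (f (Kb,1)).2; split; rewrite ?expgS ?expg0 ?mulg1 //.
  case.
  + by rewrite f_e g1.
  + by rewrite /g /=; case: (f (Ka,1)).
  + by rewrite /g /=; case: (f (Kb,1)).
  + by rewrite /g /= -ec; case: (f (Kc,1)).
- move=> h _ [x0 [y0 [_ _ H]]]; apply: functional_extensionality => A.
  by rewrite /g H.
Qed.

End Main.

Theorem corollary4p7 (M : finGroupType)
  (Mab : abelian [set: M]) (Mexp : 2 < exponent [set: M])
  (f : Klein * M -> Klein * M) (hf : half_aut f) :
  exists f' : Klein -> Klein,
    [/\ is_autK f',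
        (exists x y : M, [/\ x ^+ 2 = 1, y ^+ 2 = 1 &
           forall A : Klein, f (A, 1) = (f' A, alpha x y A)]) &
        (forall g : Klein -> Klein, is_autK g ->
           (exists x y : M, [/\ x ^+ 2 = 1, y ^+ 2 = 1 &
              forall A : Klein, f (A, 1) = (g A, alpha x y A)]) ->
           g = f')].
Proof.
have mC : forall x y : M, x * y = y * x.
  by move=> x y; exact: (centsP Mab x (in_setT x) y (in_setT y)).
case: hf => fb fh.
have finj := bij_inj fb.
case: (pickP (fun x : M => x * x != 1)) => [m /eqP hm | hall].
  exact: (@main_ex M mC f finj fh m hm).
have : exponent [set: M] %| 2.
  apply/exponentP => x _; rewrite !expgS expg0 mulg1.
  by have := hall x => /= /negbFE /eqP.
by move/(dvdn_leq (isT : 0 < 2)); rewrite leqNgt Mexp.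
Qed.
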